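(* Let $\mathcal O$ be the suboperad of $\mathrm{CNCB}$ generated by $p:=T_{bbu}$ and $s:=T_{ubb}$. Then $\mathcal O$ admits the presentation with generators $p,s$ of arity $2$ and the single relation $$s\circ_1 p=p\circ_2 s.$$ That is, $\mathcal O$ is isomorphic, via the morphism sending the generators to $p$ and $s$, to the quotient of the free operad on two binary generators by the operadic congruence generated by this relation.
   Context: For $n\ge2$, a bicoloured noncrossing configuration (BNC) of size $n$ is a regular polygon with vertices $1,\dots,n+1$ clockwise, together with disjoint sets of blue and red arcs among the arcs $(i,j)$, $1\le i<j\le n+1$. The arcs $(i,i+1)$ are the edges ($i$th edge), $(1,n+1)$ is the base, and the others are diagonals. Coloured arcs are pairwise noncrossing ($(i,j),(k,l)$ cross iff $i<k<j<l$ or $k<i<l<j$), and red arcs are diagonals. There is one BNC of size $1$, a blue segment, which is the unit. The operad $\mathrm{CNCB}$ has the BNCs as elements (arity = size). Its composition $\mathfrak C\circ_i\mathfrak D$ ($\mathfrak C$ of size $n$, $\mathfrak D$ of size $m$) glues the base of $\mathfrak D$ on the $i$th edge of $\mathfrak C$. Arcs $(a,b)$ of $\mathfrak C$ become $(\sigma(a),\sigma(b))$ with $\sigma(v)=v$ for $v\le i$ and $v+m-1$ otherwise, and arcs $(a,b)$ of $\mathfrak D$ become $(a+i-1,b+i-1)$, keeping colours. The exception is the arc $(i,i+m)$, which is red if the $i$th edge of $\mathfrak C$ and the base of $\mathfrak D$ are both uncoloured, blue if both are blue, and uncoloured otherwise. For $x,y,z\in\{b,u\}$, $T_{xyz}$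 denotes the BNC of size $2$ (a triangle with vertices $1,2,3$) whose first edge $(1,2)$ has colour $x$, whose base $(1,3)$ has colour $y$, and whose second edge $(2,3)$ has colour $z$, where $b$ = blue and $u$ = uncoloured. The suboperad generated by a set is the smallest suboperad containing it. *)

(* Defs.v *)
From HB Require Import structures.
From mathcomp Require Import all_boot finmap.
Set Implicit Arguments. Unset Strict Implicit. Unset Printing Implicit Defensive.
Local Open Scope fset_scope.

(* A BNC of size n: vertices 1..n+1, arcs (i,j) with 1 <= i < j <= n+1,
   the set of blue arcs and the set of red arcs.  Finite sets from finmap
   have Leibniz equality = extensional equality, so equality of records is
   equality of configurations. *)
Record bnc := BNC { bsize : nat; bblue : {fset (nat * nat)}; bred : {fset (nat * nat)} }.

Definition is_arc (n : nat) (a : nat * nat) : bool := [&& 1 <= a.1, a.1 < a.2 & a.2 <= n.+1].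
Definition is_diag (n : nat) (a : nat * nat) : bool :=
  [&& is_arc n a, a.2 != a.1.+1 & a != (1, n.+1)].
Definition crossing (a b : nat * nat) : bool :=
  ((a.1 < b.1) && (b.1 < a.2) && (a.2 < b.2)) || ((b.1 < a.1) && (a.1 < b.2) && (b.2 < a.2)).

Definition is_bnc (C : bnc) : Prop :=
  0 < bsize C /\
  (forall a, a \in bblue C -> is_arc (bsize C) a) /\
  (forall a, a \in bred C -> is_diag (bsize C) a) /\
  (forall a, a \in bblue C -> a \notin bred C) /\
  (forall a b, a \in bblue C `|` bred C -> b \in bblue C `|` bred C -> ~~ crossing a b) /\
  (bsize C = 1 -> bblue C = [fset (1, 2)] /\ bred C = fset0).

Definition bnc_unit : bnc := BNC 1 [fset (1, 2)] fset0.

(* T_xyz : first edge (1,2) colour x, base (1,3) colour y, second edge (2,3) colour z. *)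
Definition T_bbu : bnc := BNC 2 [fset (1, 2); (1, 3)] fset0.
Definition T_ubb : bnc := BNC 2 [fset (1, 3); (2, 3)] fset0.

Definition sigma_shift (i m v : nat) : nat := if (v <= i)%N then v else (v + m - 1)%N.

Definition bnc_comp (C : bnc) (i : nat) (D : bnc) : bnc :=
  let m := bsize D in
  let eC := (i, i.+1) in
  let bD := (1, m.+1) in
  let new := (i, (i + m)%N) in
  let mapC (x : nat * nat) := (sigma_shift i m x.1, sigma_shift i m x.2) in
  let mapD (x : nat * nat) := ((x.1 + i - 1)%N, (x.2 + i - 1)%N) in
  let cblue := eC \in bblue C in
  let dblue := bD \in bblue D in
  BNC (bsize C + m - 1)%N
    ([fset mapC x | x in [fset y in bblue C | y != eC]]
       `|` [fset mapD x | x in [fset y in bblue D | y != bD]]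
       `|` (if cblue && dblue then [fset new] else fset0))
    ([fset mapC x | x in [fset y in bred C | y != eC]]
       `|` [fset mapD x | x in [fset y in bred D | y != bD]]
       `|` (if ~~ cblue && ~~ dblue then [fset new] else fset0)).

Inductive gen_subop (G : bnc -> Prop) : bnc -> Prop :=
  | gs_unit : gen_subop G bnc_unit
  | gs_gen : forall x, G x -> gen_subop G x
  | gs_comp : forall x y i, gen_subop G x -> gen_subop G y ->
      1 <= i <= bsize x -> gen_subop G (bnc_comp x i y).

Definition gens_ps (x : bnc) : Prop := x = T_bbu \/ x = T_ubb.

Inductive gen2 := Gp | Gs.

Inductive tree := Leaf | Node of gen2 & tree & tree.

Fixpoint arity (t : tree) : nat :=
  match t with Leaf => 1 | Node _ l r => (arity l + arity r)%N end.

(* graft t i u : partial composition t o_i u in the free operad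
   (substitution of u for the i-th leaf, 1-based). *)
Fixpoint graft (t : tree) (i : nat) (u : tree) : tree :=
  match t with
  | Leaf => if i == 1 then u else Leaf
  | Node g l r => if i <= arity l then Node g (graft l i u) r
                  else Node g l (graft r (i - arity l)%N u)
  end.

Definition tp : tree := Node Gp Leaf Leaf.
Definition ts : tree := Node Gs Leaf Leaf.

Inductive cong : tree -> tree -> Prop :=
  | cong_rel : cong (graft ts 1 tp) (graft tp 2 ts)
  | cong_refl : forall t, cong t t
  | cong_sym : forall t u, cong t u -> cong u t
  | cong_trans : forall t u v, cong t u -> cong u v -> cong t v
  | cong_comp : forall t t' u u' i, 1 <= i <= arity t ->
      cong t t' -> cong u u' -> cong (graft t i u) (graft t' i u').

(* The operad morphism from the free operad to CNCB sending the generators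
   to p = T_bbu and s = T_ubb; Node g l r = g(l, r) = (g o_2 r) o_1 l. *)
Definition gen_val (g : gen2) : bnc := if g is Gp then T_bbu else T_ubb.

Fixpoint ev (t : tree) : bnc :=
  match t with
  | Leaf => bnc_unit
  | Node g l r => bnc_comp (bnc_comp (gen_val g) 2 (ev r)) 1 (ev l)
  end.

(* Main.v *)
Require Import Defs.
From mathcomp Require Import all_boot finmap zify.
From Stdlib Require Import Lia.

Fixpoint inner (t : tree) (o x y : nat) : Prop :=
  match t with
  | Leaf => False
  | Node g l r =>
     (if g is Gp then x = o /\ y = (o + arity l)%N
      else x = (o + arity l)%N /\ y = (o + arity l + arity r)%N)
     \/ inner l o x y \/ inner r (o + arity l) x y
  end.

Lemma arity_pos t : 0 < arity t.
Proof. elim: t => //= g l IHl r IHr; lia. Qed.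

Lemma inner_range t o x y : inner t o x y ->
  o <= x /\ x < y /\ y <= o + arity t /\ y < x + arity t.
Proof.
elim: t o => //= g l IHl r IHr o.
have := arity_pos l; have := arity_pos r.
by case: g => /= H1 H2; (case=> [[-> ->]|[/IHl|/IHr]]); lia.
Qed.

Lemma inner_shift t o k x y : inner t (o + k) (x + k) (y + k) <-> inner t o x y.
Proof.
elim: t o => //= g l IHl r IHr o.
have -> : (o + k + arity l = (o + arity l) + k)%N by lia.
rewrite IHl IHr; case: g; split; (case=> [H|H]; [left; lia|right; exact H]).
Qed.

Lemma inner_shift_inv t o k x y : inner t (o + k) x y ->
  exists x' y', x = (x' + k)%N /\ y = (y' + k)%N /\ inner t o x' y'.
Proof.
move=> H; have := inner_range _ _ _ _ H => Hr.
exists (x - k)%N, (y - k)%N; do 2 (split; first lia).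
rewrite -(inner_shift _ _ k); have -> : (x - k + k = x)%N by lia.
by have -> : (y - k + k = y)%N by lia.
Qed.

Lemma arity_graft t i u : 1 <= i <= arity t -> arity (graft t i u) = (arity t + arity u - 1)%N.
Proof.
elim: t i => /= [|g l IHl r IHr] i Hi.
  case/andP: Hi => H1 H2; have -> : i = 1 by lia.
  rewrite /=; lia.
have := arity_pos l; have := arity_pos r; have := arity_pos u => Hu Hr Hl.
case: leqP => Hil /=.
  rewrite IHl; lia.
rewrite IHr; lia.
Qed.

Lemma sh_le k m v : v <= k -> sigma_shift k m v = v.
Proof. by rewrite /sigma_shift => ->. Qed.
Lemma sh_gt k m v : k < v -> sigma_shift k m v = (v + m - 1)%N.
Proof. by move=> H; rewrite /sigma_shift leqNgt H. Qed.

Lemma graft_inner t i u o x y : 1 <= i <= arity t ->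
  inner (graft t i u) o x y <->
  (exists x' y', inner t o x' y' /\ ~ (x' = (o + i - 1)%N /\ y' = (o + i - 1).+1) /\
      x = sigma_shift (o + i - 1) (arity u) x' /\ y = sigma_shift (o + i - 1) (arity u) y')
  \/ inner u (o + i - 1) x y
  \/ (inner t o (o + i - 1) (o + i - 1).+1 /\ x = (o + i - 1)%N /\ y = (o + i - 1 + arity u)%N).
Proof.
elim: t i o => [|g l IHl r IHr] i o Hi.
  have Ei : i = 1 by move: Hi => /= ; lia.
  subst i; have -> : (o + 1 - 1 = o)%N by lia.
  rewrite /=; split; first by move=> H; right; left.
  by case=> [[? [? [[]]]]|[//|[[]]]].
have Hl := arity_pos l; have Hr := arity_pos r; have Hu := arity_pos u.
set k := (o + i - 1)%N; set m := arity u.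
move: Hi; rewrite /= => Hi.
case: leqP => Hil.
- have Hi' : 1 <= i <= arity l by lia.
  have IH := IHl i o Hi'; rewrite -/k -/m in IH.
  rewrite /= (arity_graft _ _ _ Hi') IH -/m; split.
  + case.
      case: g => [[-> ->]|[-> ->]].
        case: (boolP ((i == 1) && (arity l == 1))) => [/andP[/eqP E1 /eqP E2]|Hne].
          right; right; split; first by left; rewrite /k; lia.
          rewrite /k /m; lia.
        left; exists o, (o + arity l)%N; split; first by left.
        split; first by rewrite /k; move: Hne; case: eqP; case: eqP; lia.
        by rewrite sh_le ?sh_gt /k; lia.
      left; exists (o + arity l)%N, (o + arity l + arity r)%N; split; first by left.
      split; first by rewrite /k; lia.
      by rewrite !sh_gt /k; lia.
    case=> [[[x' [y' [H1 [H2 [-> ->]]]]]|[H|[H1 [-> ->]]]]|H].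
    * by left; exists x', y'; split=> //; right; left.
    * by right; left.
    * by right; right; split=> //; right; left.
    * have E : (o + (arity l + m - 1) = (o + arity l) + (m - 1))%N by lia.
      rewrite E in H; case/inner_shift_inv: H => x' [y' [-> [-> H]]].
      have := inner_range _ _ _ _ H => Hrg.
      left; exists x', y'; split; first by right; right.
      split; first by rewrite /k; lia.
      by rewrite !sh_gt /k; lia.
  + case=> [[x' [y' [H1 [H2 [-> ->]]]]]|[H|[H1 [-> ->]]]].
    * case: H1 => [|[H1|H1]].
        case: g => [[Ex Ey]|[Ex Ey]]; subst x' y'.
          by left; rewrite sh_le ?sh_gt /k; lia.
        by left; rewrite !sh_gt /k; lia.
      by right; left; left; exists x', y'.
      have := inner_range _ _ _ _ H1 => Hrg.
      right; right; rewrite !sh_gt /k; try lia.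
      have -> : (o + (arity l + m - 1) = (o + arity l) + (m - 1))%N by lia.
      have -> : (x' + m - 1 = x' + (m - 1))%N by lia.
      have -> : (y' + m - 1 = y' + (m - 1))%N by lia.
      by rewrite inner_shift.
    * by right; left; right; left.
    * case: H1 => [|[H1|H1]].
        case: g => [[Ex Ey]|[Ex Ey]].
          by left; rewrite /k /m in Ex Ey *; lia.
        rewrite /k in Ex; lia.
      by right; left; right; right.
      have := inner_range _ _ _ _ H1 => Hrg; rewrite /k in Hrg; lia.
- have Hi' : 1 <= i - arity l <= arity r by lia.
  have IH := IHr (i - arity l)%N (o + arity l)%N Hi'.
  have Ek : (o + arity l + (i - arity l) - 1 = k)%N by rewrite /k; lia.
  rewrite Ek -/m in IH.
  rewrite /= (arity_graft _ _ _ Hi') IH -/m; split.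
  + case.
      case: g => [[-> ->]|[-> ->]].
        left; exists o, (o + arity l)%N; split; first by left.
        split; first by rewrite /k; lia.
        by rewrite !sh_le /k; lia.
      case: (boolP ((k == o + arity l) && (arity r == 1))) => [/andP[/eqP E1 /eqP E2]|Hne].
        right; right; split; first by left; lia.
        lia.
      left; exists (o + arity l)%N, (o + arity l + arity r)%N; split; first by left.
      split; first by move: Hne; case: eqP; case: eqP; lia.
      by rewrite sh_le ?sh_gt /k; lia.
    case=> [H|[[x' [y' [H1 [H2 [-> ->]]]]]|[H|[H1 [-> ->]]]]].
    * have := inner_range _ _ _ _ H => Hrg.
      left; exists x, y; split; first by right; left.
      split; first by rewrite /k; lia.
      by rewrite !sh_le /k; lia.
    * by left; exists x', y'; split=> //; right; right.
    * by right; left.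
    * by right; right; split=> //; right; right.
  + case=> [[x' [y' [H1 [H2 [-> ->]]]]]|[H|[H1 [-> ->]]]].
    * case: H1 => [|[H1|H1]].
        case: g => [[Ex Ey]|[Ex Ey]]; subst x' y'.
          by left; rewrite !sh_le /k; lia.
        by left; rewrite sh_le ?sh_gt /k; lia.
      have := inner_range _ _ _ _ H1 => Hrg.
      by right; left; rewrite !sh_le /k; try lia.
      by right; right; left; exists x', y'.
    * by right; right; right; left.
    * case: H1 => [|[H1|H1]].
        case: g => [[Ex Ey]|[Ex Ey]].
          rewrite /k in Ex; lia.
        by left; rewrite /k /m in Ex Ey *; lia.
      have := inner_range _ _ _ _ H1 => Hrg; rewrite /k in Hrg; lia.
      by right; right; right; right.
Qed.

Local Open Scope fset_scope.
Local Open Scope fset_scope.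
Lemma comp_blue C i D a : a \in bblue (bnc_comp C i D) <->
  (exists2 b, (b \in bblue C) && (b != (i,i.+1)) & a = (sigma_shift i (bsize D) b.1, sigma_shift i (bsize D) b.2)) \/
  (exists2 b, (b \in bblue D) && (b != (1,(bsize D).+1)) & a = ((b.1 + i - 1)%N, (b.2 + i - 1)%N)) \/
  [/\ (i,i.+1) \in bblue C, (1,(bsize D).+1) \in bblue D & a = (i, (i + bsize D)%N)].
Proof.
rewrite /bnc_comp /= !inE; split.
- case/orP=> [/orP[]|].
  + by case/imfsetP=> b /=; rewrite !inE => H ->; left; exists b.
  + by case/imfsetP=> b /=; rewrite !inE => H ->; right; left; exists b.
  + case: ifP => [/andP[H1 H2]|]; last by rewrite inE.
    by rewrite inE => /eqP ->; right; right.
- case=> [[b H ->]|[[b H ->]|[H1 H2 ->]]].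
  + by apply/orP; left; apply/orP; left; apply/imfsetP; exists b; rewrite ?inE.
  + by apply/orP; left; apply/orP; right; apply/imfsetP; exists b; rewrite ?inE.
  + by rewrite H1 H2 inE eqxx !orbT.
Qed.
Lemma comp_red C i D : bred C = fset0 -> bred D = fset0 -> (1,(bsize D).+1) \in bblue D ->
  bred (bnc_comp C i D) = fset0.
Proof.
move=> HC HD Hb; rewrite /bnc_comp /= HC HD Hb andbF.
apply/fsetP=> a; rewrite !inE; apply/negbTE; apply/negP; rewrite orbF => /orP[]/imfsetP[b /=]; by rewrite !inE.
Qed.

Local Close Scope fset_scope.

Definition chr (C : bnc) (t : tree) : Prop :=
  bsize C = arity t /\ bred C = fset0 /\
  forall a b, (a, b) \in bblue C <-> (a = 1 /\ b = (arity t).+1) \/ inner t 1 a b.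

Lemma chr_comp C D t u i : chr C t -> chr D u -> 1 <= i <= arity t ->
  chr (bnc_comp C i D) (graft t i u).
Proof.
move=> [HC1 [HC2 HC3]] [HD1 [HD2 HD3]] Hi.
have Hrt := arity_pos t; have Hru := arity_pos u.
have HDb : (1, (bsize D).+1) \in bblue D by apply/HD3; left; rewrite HD1.
split; first by rewrite /= (arity_graft _ _ _ Hi) HC1 HD1.
split; first by apply: comp_red.
move=> a b; rewrite comp_blue (arity_graft _ _ _ Hi) graft_inner //.
have -> : (1 + i - 1 = i)%N by lia.
rewrite HD1; set m := arity u; set n := arity t.
move: Hi => /andP[Hi1 Hi2].
split.
- case=> [[[x' y'] /andP[H1 H2] /= [-> ->]]|[[[x' y'] /andP[H1 H2] /= [-> ->]]|[H1 H2 [-> ->]]]].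
  + case/HC3: H1 => [[Ex Ey]|H1].
      subst x' y'; left; rewrite sh_le ?sh_gt; lia.
    right; left; exists x', y'; split=> //; split; first by case=> E1 E2; move: H2; rewrite E1 E2 eqxx.
    done.
  + case/HD3: H1 => [[Ex Ey]|H1]; first by move: H2; rewrite Ex Ey eqxx.
    right; right; left.
    have -> : (x' + i - 1 = x' + (i - 1))%N by lia.
    have -> : (y' + i - 1 = y' + (i - 1))%N by lia.
    move: (proj2 (inner_shift u 1 (i - 1) x' y') H1).
    by have -> : (1 + (i - 1) = i)%N by lia.
  + case/HC3: H1 => [[Ex Ey]|H1].
      left; lia.
    by right; right; right.
- case=> [[-> ->]|[[x' [y' [H1 [H2 [-> ->]]]]]|[H|[H1 [-> ->]]]]].
  + case: (boolP ((i == 1) && (n == 1))) => [/andP[/eqP E1 /eqP E2]|Hne].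
      right; right; split; [by apply/HC3; left; lia| by apply/HD3; left| congr pair; lia].
    left; exists (1, n.+1); last by rewrite /= sh_le ?sh_gt //; try lia; congr pair; lia.
    apply/andP; split; first by apply/HC3; left.
    apply/eqP; case=> E1 E2; move: Hne; rewrite -E1; lia.
  + left; exists (x', y'); last done.
    apply/andP; split; first by apply/HC3; right.
    by apply/eqP; case=> E1 E2; apply: H2.
  + have E : i = (1 + (i - 1))%N by lia.
    rewrite E in H; case/inner_shift_inv: H => x' [y' [-> [-> H]]].
    have := inner_range _ _ _ _ H => Hrg.
    right; left; exists (x', y'); last by rewrite /=; congr pair; lia.
    apply/andP; split; first by apply/HD3; right.
    apply/eqP; case=> E1 E2; lia.
  + right; right; split; [by apply/HC3; right | by apply/HD3; left | done].
Qed.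

Lemma chr_unit : chr bnc_unit Leaf.
Proof.
split=> //; split=> // a b; rewrite /= inE; split.
  by case/eqP=> -> ->; left.
by case=> // [[-> ->]].
Qed.

Lemma chr_gen g : chr (gen_val g) (Node g Leaf Leaf).
Proof.
split; first by case: g.
split; first by case: g.
move=> a b; case: g; rewrite /= !inE; split.
- by case/orP=> /eqP [-> ->]; [right; left|left].
- by case=> [[-> ->]|[[-> ->]|[]//]]; rewrite eqxx ?orbT.
- by case/orP=> /eqP [-> ->]; [left|right; left].
- by case=> [[-> ->]|[[-> ->]|[]//]]; rewrite eqxx ?orbT.
Qed.

Lemma chr_ev t : chr (ev t) t.
Proof.
elim: t => [|g l IHl r IHr]; first exact: chr_unit.
rewrite /=.
have H1 := chr_comp _ _ _ _ 2 (chr_gen g) IHr erefl.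
apply: (chr_comp _ _ _ _ 1 H1 IHl).
rewrite /=; have := arity_pos r; lia.
Qed.

Lemma chr_uniq C D t : chr C t -> chr D t -> C = D.
Proof.
case: C => sC bC rC; case: D => sD bD rD [/= E1 [/= E2 E3]] [/= F1 [/= F2 F3]].
congr BNC; [by rewrite E1 F1| |by rewrite E2 F2].
apply/fsetP=> [[a b]]; apply/idP/idP => H.
  by apply/F3; apply/E3.
by apply/E3; apply/F3.
Qed.

Lemma ev_graft t i u : 1 <= i <= arity t -> ev (graft t i u) = bnc_comp (ev t) i (ev u).
Proof.
move=> Hi; apply: (chr_uniq _ _ (graft t i u)); first exact: chr_ev.
exact: chr_comp (chr_ev t) (chr_ev u) Hi.
Qed.

Lemma ev_size t : bsize (ev t) = arity t.
Proof. by case: (chr_ev t). Qed.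

Lemma chr_ext C t t' : chr C t -> arity t = arity t' ->
  (forall x y, inner t 1 x y <-> inner t' 1 x y) -> chr C t'.
Proof.
move=> [H1 [H2 H3]] Ea Ei; split; first by rewrite H1.
split=> // a b; by rewrite H3 Ea Ei.
Qed.

Lemma ev_inner t1 t2 : ev t1 = ev t2 -> arity t1 = arity t2 /\
  forall x y, inner t1 1 x y <-> inner t2 1 x y.
Proof.
move=> E; have Ea : arity t1 = arity t2 by rewrite -!ev_size E.
split=> // x y.
have [_ [_ H1]] := chr_ev t1; have [_ [_ H2]] := chr_ev t2.
rewrite E in H1.
split=> H.
- have := inner_range _ _ _ _ H => Hr.
  have : (x, y) \in bblue (ev t2) by apply/H1; right.
  case/H2 => // [[Ex Ey]]; lia.
- have := inner_range _ _ _ _ H => Hr.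
  have : (x, y) \in bblue (ev t2) by apply/H2; right.
  case/H1 => // [[Ex Ey]]; lia.
Qed.

Definition isP (t : tree) : bool := if t is Node Gp _ _ then true else false.
Fixpoint isn (t : tree) : bool :=
  match t with
  | Leaf => true
  | Node Gp l r => isn l && isn r
  | Node Gs l r => [&& ~~ isP l, isn l & isn r]
  end.

Lemma noP t o x y : isn t -> ~~ isP t -> inner t o x y -> x <> o.
Proof.
elim: t o => //= g l IHl r IHr o; case: g => //= /and3P[Hl Nl Nr] _.
have := arity_pos l => HL.
case=> [[-> _]|[H|H]]; first lia.
  exact: IHl H.
have := inner_range _ _ _ _ H; lia.
Qed.

Lemma root_p_bound l r o y : inner (Node Gp l r) o o y -> y <= o + arity l.
Proof.
have := arity_pos l => HL.
case=> [[_ ->]//|[H|H]]; have := inner_range _ _ _ _ H; lia.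
Qed.

Lemma root_s_bound l r o x : inner (Node Gs l r) o x (o + arity l + arity r) -> o + arity l <= x.
Proof.
have := arity_pos r => HR.
case=> [[-> _]//|[H|H]]; have := inner_range _ _ _ _ H; lia.
Qed.

Lemma restr_l g l r o x y : inner l o x y <->
  inner (Node g l r) o x y /\ y <= o + arity l /\ ~ (x = o /\ y = o + arity l).
Proof.
have := arity_pos l => HL; have := arity_pos r => HR.
split.
  move=> H; have := inner_range _ _ _ _ H => Hr.
  split; first by right; left.
  lia.
case=> [[Hg|[H|H]] [Hy Hn]] //.
  by move: Hg; case: g => [] [Ex Ey]; exfalso; lia.
have := inner_range _ _ _ _ H; lia.
Qed.

Lemma restr_r g l r o x y : inner r (o + arity l) x y <->
  inner (Node g l r) o x y /\ o + arity l <= x /\ ~ (x = o + arity l /\ y = o + arity l + arity r).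
Proof.
have := arity_pos l => HL; have := arity_pos r => HR.
split.
  move=> H; have := inner_range _ _ _ _ H => Hr.
  split; first by right; right.
  lia.
case=> [[Hg|[H|H]] [Hy Hn]] //.
  by move: Hg; case: g => [] [Ex Ey]; exfalso; lia.
have := inner_range _ _ _ _ H; lia.
Qed.

Lemma isn_node g l r : isn (Node g l r) -> isn l && isn r.
Proof. by case: g => /= [|/and3P[]] // _ -> ->. Qed.

Lemma nf_inj t1 t2 o : isn t1 -> isn t2 -> arity t1 = arity t2 ->
  (forall x y, inner t1 o x y <-> inner t2 o x y) -> t1 = t2.
Proof.
elim: t1 t2 o => [|g1 l1 IHl r1 IHr] [|g2 l2 r2] o N1 N2 Ea Ei //; move: Ea => /= Ea.
- have := arity_pos l2; have := arity_pos r2; lia.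
- have := arity_pos l1; have := arity_pos r1; lia.
have HL1 := arity_pos l1; have HL2 := arity_pos l2.
have [Eg EL] : g1 = g2 /\ arity l1 = arity l2.
  case: g1 N1 Ei; case: g2 N2 => N2 N1 Ei.
  - split=> //; apply/eqP; rewrite eqn_leq; apply/andP; split.
      have : inner (Node Gp l1 r1) o o (o + arity l1) by left.
      by move/Ei/root_p_bound; lia.
    have : inner (Node Gp l2 r2) o o (o + arity l2) by left.
    by move/Ei/root_p_bound; lia.
  - have : inner (Node Gp l1 r1) o o (o + arity l1) by left.
    by move/Ei/(noP _ _ _ _ N2 isT)/(_ erefl).
  - have : inner (Node Gp l2 r2) o o (o + arity l2) by left.
    by move/Ei/(noP _ _ _ _ N1 isT)/(_ erefl).
  - split=> //; apply/eqP; rewrite eqn_leq; apply/andP; split.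
      have : inner (Node Gs l2 r2) o (o + arity l2) (o + arity l2 + arity r2) by left.
      move/Ei; rewrite (_ : o + arity l2 + arity r2 = o + arity l1 + arity r1)%N; last lia.
      move/root_s_bound; lia.
    have : inner (Node Gs l1 r1) o (o + arity l1) (o + arity l1 + arity r1) by left.
    move/Ei; rewrite (_ : o + arity l1 + arity r1 = o + arity l2 + arity r2)%N; last lia.
    move/root_s_bound; lia.
subst g2.
have ER : arity r1 = arity r2 by lia.
have N1' := isn_node _ _ _ N1; have N2' := isn_node _ _ _ N2.
case/andP: N1' => Nl1 Nr1; case/andP: N2' => Nl2 Nr2.
congr Node.
  apply: (IHl _ o) => // x y.
  rewrite (restr_l g1 l1 r1) (restr_l g1 l2 r2) Ei EL //.
apply: (IHr _ (o + arity l1)%N) => // x y.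
rewrite (restr_r g1 l1 r1) EL (restr_r g1 l2 r2) -EL Ei EL ER //.
Qed.

Fixpoint fixS (l r : tree) : tree :=
  match l with Node Gp x y => Node Gp x (fixS y r) | _ => Node Gs l r end.
Fixpoint nf (t : tree) : tree :=
  match t with
  | Leaf => Leaf
  | Node Gp l r => Node Gp (nf l) (nf r)
  | Node Gs l r => fixS (nf l) (nf r)
  end.

Lemma isn_fixS l r : isn l -> isn r -> isn (fixS l r).
Proof.
elim: l => [|g x IHx y IHy] //= Hl Hr.
case: g Hl => /=.
  by case/andP=> -> Hy; rewrite IHy.
by case/and3P=> H1 H2 H3; rewrite H1 H2 H3 Hr.
Qed.

Lemma isn_nf t : isn (nf t).
Proof.
elim: t => [|g l IHl r IHr] //=; case: g => /=; first by rewrite IHl IHr.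
exact: isn_fixS.
Qed.

Lemma cong_node g l l' r r' : cong l l' -> cong r r' -> cong (Node g l r) (Node g l' r').
Proof.
move=> Hl Hr.
have E : forall a b, Node g a b = graft (graft (Node g Leaf Leaf) 2 b) 1 a by [].
rewrite (E l r) (E l' r').
apply: (@cong_comp (graft (Node g Leaf Leaf) 2 r) (graft (Node g Leaf Leaf) 2 r') l l' 1) => //.
apply: (@cong_comp (Node g Leaf Leaf) (Node g Leaf Leaf) r r' 2) => //.
exact: cong_refl.
Qed.

Lemma cong_inst x y z : cong (Node Gs (Node Gp x y) z) (Node Gp x (Node Gs y z)).
Proof.
have H3 := @cong_comp (graft ts 1 tp) (graft tp 2 ts) z z 3 isT cong_rel (cong_refl z).
have Hz := arity_pos z; have Hy := arity_pos y.
have H2 := @cong_comp (graft (graft ts 1 tp) 3 z) _ y y 2 ltac:(rewrite /=; lia) H3 (cong_refl y).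
have H1 := @cong_comp (graft (graft (graft ts 1 tp) 3 z) 2 y) _ x x 1 ltac:(rewrite /=; lia) H2 (cong_refl x).
exact: H1.
Qed.

Lemma cong_fixS l r : cong (Node Gs l r) (fixS l r).
Proof.
elim: l => [|g x IHx y IHy] /=; first exact: cong_refl.
case: g; last exact: cong_refl.
apply: (cong_trans (cong_inst x y r)).
apply: cong_node; [exact: cong_refl | exact: IHy].
Qed.

Lemma cong_nf t : cong t (nf t).
Proof.
elim: t => [|g l IHl r IHr] /=; first exact: cong_refl.
case: g; first exact: cong_node.
apply: (cong_trans (cong_node Gs _ _ _ _ IHl IHr)).
exact: cong_fixS.
Qed.

Lemma cong_ev t1 t2 : cong t1 t2 -> ev t1 = ev t2.
Proof.
elim=> {t1 t2}.
- apply: (chr_uniq _ _ (graft ts 1 tp)); first exact: chr_ev.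
  apply: (chr_ext _ (graft tp 2 ts)); [exact: chr_ev | done |].
  move=> x y /=; lia.
- by [].
- by move=> t u _ ->.
- by move=> t u v _ -> _ ->.
- move=> t t' u u' i Hi _ Et _ Eu.
  have Ea : arity t = arity t' by rewrite -!ev_size Et.
  rewrite !ev_graft ?Et ?Eu //; by rewrite -Ea.
Qed.

Theorem theorem3p21 :
  (* ev is a morphism of operads from the free operad *)
  (forall t i u, 1 <= i <= arity t -> ev (graft t i u) = bnc_comp (ev t) i (ev u)) /\
  (* its image is the suboperad O generated by p and s *)
  (forall x, gen_subop gens_ps x <-> exists t, ev t = x) /\
  (* its kernel is the operadic congruence generated by s o_1 p = p o_2 s *)
  (forall t1 t2, ev t1 = ev t2 <-> cong t1 t2).
Proof.
split; first exact: ev_graft.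
split.
- move=> x; split.
  + elim=> [|y [->|->]|y z i _ [t Ht] _ [u Hu] Hi].
    * by exists Leaf.
    * exists tp; apply: (chr_uniq _ _ tp); [exact: chr_ev | exact: (chr_gen Gp)].
    * exists ts; apply: (chr_uniq _ _ ts); [exact: chr_ev | exact: (chr_gen Gs)].
    * exists (graft t i u); rewrite ev_graft -?Ht -?Hu //.
      by rewrite -ev_size Ht.
  + case=> t <-; elim: t => [|g l IHl r IHr] /=; first exact: gs_unit.
    apply: gs_comp => //.
      apply: gs_comp => //; first by apply: gs_gen; case: g; [left|right].
      by case: g.
    rewrite /= ev_size; have := arity_pos r; case: g => /=; lia.
- move=> t1 t2; split; last exact: cong_ev.
  move=> E.
  have E' : ev (nf t1) = ev (nf t2) by rewrite -(cong_ev _ _ (cong_nf t1)) -(cong_ev _ _ (cong_nf t2)).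
  have [Ea Ei] := ev_inner _ _ E'.
  have En := nf_inj _ _ _ (isn_nf t1) (isn_nf t2) Ea Ei.
  apply: (cong_trans (cong_nf t1)); rewrite En; apply: cong_sym; exact: cong_nf.
Qed.
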